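(* Let $r\in\mathbb{R}$. For all integers $n,k \geq 0$, \[ S_{2,r}(n,k) = \sum_{l=0}^k \binom{n}{l} r^l S_2(n-l,k-l). \]
   Context: $S_2(n,k)$ denotes the Stirling numbers of the second kind, given by $\frac{1}{k!}(e^t-1)^k = \sum_{n\ge k} S_2(n,k)\frac{t^n}{n!}$, with $S_2(a,b)=0$ whenever $a<b$ (and $\binom{n}{l}=0$ for $l>n$). For $r\in\mathbb{R}$ and integer $k\ge 0$, the extended Stirling numbers of the second kind $S_{2,r}(n,k)$ are defined by \[ \frac{1}{k!}(e^t-1+rt)^k = \sum_{n=k}^\infty S_{2,r}(n,k)\frac{t^n}{n!}, \] with $S_{2,r}(n,k)=0$ for $n<k$. *)

(* Defs.v *)
(* Exponential generating functions handled as formal power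
   series: the coefficient of t^n in a power series with zero constant term
   raised to the k-th power only depends on its coefficients of degree <= n,
   so we compute it with the degree-n truncation (a polynomial). *)
From mathcomp Require Import all_boot all_order all_algebra.
Set Implicit Arguments. Unset Strict Implicit. Unset Printing Implicit Defensive.
Import Order.TTheory GRing.Theory Num.Theory.
Local Open Scope ring_scope.

Definition trunc_series (R : ringType) (F : nat -> R) (N : nat) : {poly R} :=
  \poly_(i < N.+1) F i.

Definition fps_pow_coef (R : ringType) (F : nat -> R) (k n : nat) : R :=
  ((trunc_series F n) ^+ k)`_n.

Definition ext_series (R : fieldType) (r : R) (i : nat) : R :=
  (if i == 0%N then 0 else (i`!%:R)^-1) + (if i == 1%N then r else 0).

Definition exp_m1_series (R : fieldType) (i : nat) : R :=
  if i == 0%N then 0 else (i`!%:R)^-1.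

(* (1/k!) (e^t - 1)^k = sum_n S_2(n,k) t^n/n! *)
Definition stirling2 (R : fieldType) (n k : nat) : R :=
  n`!%:R / k`!%:R * fps_pow_coef (@exp_m1_series R) k n.

(* (1/k!) (e^t - 1 + r t)^k = sum_n S_{2,r}(n,k) t^n/n! *)
Definition ext_stirling2 (R : fieldType) (r : R) (n k : nat) : R :=
  n`!%:R / k`!%:R * fps_pow_coef (ext_series r) k n.

(* Main.v *)
Require Import Defs.
From mathcomp Require Import all_boot all_order all_algebra.
From mathcomp Require Import reals.
From mathcomp Require Import ring.
Import Order.TTheory GRing.Theory Num.Theory.
Local Open Scope ring_scope.

Lemma coef_pow_agree (R : comNzRingType) (p q : {poly R}) (m : nat) :
  (forall i, (i <= m)%N -> p`_i = q`_i) ->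
  forall j i, (i <= m)%N -> (p ^+ j)`_i = (q ^+ j)`_i.
Proof.
move=> H; elim=> [|j IH] i Hi; first by rewrite !expr0.
rewrite !exprS !coefM; apply: eq_bigr => a _.
have Ha : (a <= m)%N by apply: leq_trans Hi; rewrite -ltnS.
rewrite H // IH //; apply: leq_trans Hi; exact: leq_subr.
Qed.

Theorem theorem2 (R : realType) (r : R) (n k : nat) :
  ext_stirling2 r n k =
  \sum_(l < k.+1) 'C(n, l)%:R * r ^+ l * stirling2 R (n - l) (k - l).
Proof.
rewrite /ext_stirling2 /stirling2 /fps_pow_coef.
set P := trunc_series (@exp_m1_series R) n.
have -> : (trunc_series (ext_series r) n ^+ k)`_n = ((P + r *: 'X) ^+ k)`_n.
  apply: (@coef_pow_agree _ _ _ n) => // i Hi.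
  rewrite /P /trunc_series coefD coefZ coefX !coef_poly ltnS Hi /ext_series /exp_m1_series.
  by case: (i == 1%N); rewrite ?mulr1 ?mulr0 ?addr0.
rewrite exprDn coef_sum mulr_sumr; apply: eq_bigr => -[l Hl] _ /=.
rewrite coefMn exprZn -scalerAr coefZ.
rewrite [P ^+ _ * _]mulrC coefXnM.
have fn0 : forall m, (m`!%:R : R) != 0 by move=> m; rewrite pnatr_eq0 -lt0n fact_gt0.
case: ltnP => Hnl.
  by rewrite (@bin_small n l) // !(mulr0, mul0r, mul0rn).
have -> : (P ^+ (k - l))`_(n - l) = (trunc_series (@exp_m1_series R) (n - l) ^+ (k - l))`_(n - l).
  apply: (@coef_pow_agree _ _ _ (n - l)) => // i Hi.
  by rewrite /P /trunc_series !coef_poly !ltnS Hi (leq_trans Hi (leq_subr _ _)).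
have Hl2 : (l <= k)%N by rewrite -ltnS.
have H1 := bin_fact Hl2; have H2 := bin_fact Hnl.
have H1' : ('C(k, l)%:R * (l`!%:R * (k - l)`!%:R) : R) = k`!%:R by rewrite -!natrM H1.
have H2' : ('C(n, l)%:R * (l`!%:R * (n - l)`!%:R) : R) = n`!%:R by rewrite -!natrM H2.
rewrite -mulr_natr -H1' -H2'.
have := fn0 l; have := fn0 (k - l)%N; have := fn0 (n - l)%N.
have : ('C(k, l)%:R : R) != 0 by rewrite pnatr_eq0 -lt0n bin_gt0.
move=> a b c' d.
field.
by rewrite a c' d.
Qed.
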